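(* Let $L = \{(ay+b,y,\tfrac{1}{2}by+c) : y \in \mathbb{R}\}$ with $a,b,c \in \mathbb{R}$ be a horizontal line. Write $q_{L}(y) := \tfrac{1}{2}ay^{2} + by + c$ and $\mathcal{Q}_{L}(y) := (y,q_{L}(y)) \in \mathbb{W}$. Then there is an absolute constant $C$ such that for every $p = (x,y,t) \in \mathbb{H}$, $$\max\{d_{\mathrm{par}}(\Pi(p),\mathcal{Q}_{L}(y)),\ |x - \dot{q}_{L}(y)|\} \leq C(1+|a|)\operatorname{dist}(p,L).$$
   Context: $\mathbb{H}$ is $\mathbb{R}^{3}$ with group law $(x_{1},y_{1},t_{1}) \cdot (x_{2},y_{2},t_{2}) = (x_{1}+x_{2},y_{1}+y_{2},t_{1}+t_{2}+\tfrac{1}{2}(x_{1}y_{2}-x_{2}y_{1}))$ and metric $d(p,q) = \|q^{-1}\cdot p\|$ with $\|(x,y,t)\| = \max\{\sqrt{x^{2}+y^{2}},\sqrt{|t|}\}$; $\operatorname{dist}$ is w.r.t. $d$. $\mathbb{W}$ is $\mathbb{R}^{2}$ with $d_{\mathrm{par}}((y,t),(\xi,\tau)) = \max\{|y-\xi|,|t-\tau|^{1/2}\}$, and $\Pi(x,y,t) := (y,t+\tfrac{1}{2}xy) \in \mathbb{W}$ is the vertical projection. $\dot{q}_{L}$ denotes the derivative of $q_{L}$. *)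

(* Defs.v *)
From Stdlib Require Import Reals.
From Coquelicot Require Import Coquelicot.
Open Scope R_scope.

Definition Hpt : Type := (R * R * R)%type.
Definition Hx (p : Hpt) : R := fst (fst p).
Definition Hy (p : Hpt) : R := snd (fst p).
Definition Ht (p : Hpt) : R := snd p.

Definition Hmul (p q : Hpt) : Hpt :=
  (Hx p + Hx q, Hy p + Hy q,
   Ht p + Ht q + / 2 * (Hx p * Hy q - Hx q * Hy p)).

Definition Hinv (p : Hpt) : Hpt := (- Hx p, - Hy p, - Ht p).

Definition Hnorm (p : Hpt) : R :=
  Rmax (sqrt (Hx p ^ 2 + Hy p ^ 2)) (sqrt (Rabs (Ht p))).

Definition Hdist (p q : Hpt) : R := Hnorm (Hmul (Hinv q) p).

(* dist(p, S) = inf_{q in S} d(p,q)  (S nonempty in our use) *)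
Definition Hdist_set (p : Hpt) (S : Hpt -> Prop) : R :=
  real (Glb_Rbar (fun r => exists q, S q /\ r = Hdist p q)).

Definition dpar (w v : R * R) : R :=
  Rmax (Rabs (fst w - fst v)) (sqrt (Rabs (snd w - snd v))).

Definition Proj (p : Hpt) : R * R := (Hy p, Ht p + / 2 * Hx p * Hy p).

Definition hline (a b c : R) : Hpt -> Prop :=
  fun q => exists y : R, q = (a * y + b, y, / 2 * b * y + c).

Definition qL (a b c : R) (y : R) : R := / 2 * a * y ^ 2 + b * y + c.
Definition QL (a b c : R) (y : R) : R * R := (y, qL a b c y).

(* Main.v *)
Require Import Defs.
From Stdlib Require Import Reals Lra Psatz.
From Coquelicot Require Import Coquelicot.
Open Scope R_scope.

Lemma core (a d u v w : R) : Rabs u <= d -> Rabs v <= d -> Rabs w <= d^2 ->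
  Rabs (v - a*u) <= 2*(1+Rabs a)*d /\
  sqrt (Rabs (w + v*u/2 - a*u^2/2)) <= 2*(1+Rabs a)*d.
Proof.
  intros Hu Hv Hw.
  assert (Hd : 0 <= d) by (pose proof (Rabs_pos u); lra).
  pose proof (Rabs_pos a) as Ha.
  assert (Hau : Rabs (a*u) <= Rabs a * d).
  { rewrite Rabs_mult. apply Rmult_le_compat_l; lra. }
  split.
  - unfold Rminus. eapply Rle_trans. apply Rabs_triang. rewrite Rabs_Ropp. nra.
  - assert (HE : Rabs (w + v*u/2 - a*u^2/2) <= (2*(1+Rabs a)*d)^2).
    { assert (H1 : Rabs (v*u/2) <= d^2/2).
      { unfold Rdiv. rewrite !Rabs_mult. rewrite Rabs_inv, (Rabs_right 2) by lra.
        assert (Rabs v * Rabs u <= d*d) by (apply Rmult_le_compat; auto using Rabs_pos). nra. }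
      assert (H2 : Rabs (a*u^2/2) <= Rabs a * d^2/2).
      { unfold Rdiv. rewrite !Rabs_mult. rewrite Rabs_inv, (Rabs_right 2) by lra.
        rewrite <- RPow_abs.
        assert (Rabs u ^2 <= d^2) by (apply pow_incr; split; auto using Rabs_pos). nra. }
      unfold Rminus. eapply Rle_trans. apply Rabs_triang. rewrite Rabs_Ropp.
      eapply Rle_trans. apply Rplus_le_compat_r. apply Rabs_triang.
      nra. }
    rewrite <- (sqrt_pow2 (2*(1+Rabs a)*d)) by nra.
    apply sqrt_le_1_alt. exact HE.
Qed.

Lemma derq a b c y : Derive (qL a b c) y = a*y + b.
Proof. apply is_derive_unique. unfold qL. auto_derive; auto. field. Qed.

Theorem lemma4p16 :
  exists C : R, forall (a b c : R) (p : Hpt),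
    Rmax (dpar (Proj p) (QL a b c (Hy p)))
         (Rabs (Hx p - Derive (qL a b c) (Hy p)))
    <= C * (1 + Rabs a) * Hdist_set p (hline a b c).
Proof.
  exists 2. intros a b c [[x y] t].
  set (M := Rmax _ _).
  assert (Hk : 0 < 2*(1+Rabs a)) by (pose proof (Rabs_pos a); lra).
  assert (Hlb : forall q, hline a b c q -> M / (2*(1+Rabs a)) <= Hdist (x,y,t) q).
  { intros q [s ->].
    apply Rmult_le_reg_r with (2*(1+Rabs a)); [lra|].
    unfold Rdiv; rewrite Rmult_assoc, Rinv_l, Rmult_1_r by lra.
    unfold Hdist, Hnorm, Hmul, Hinv, Hx, Hy, Ht; simpl.
    set (u := y - s). set (v := x - (a*s+b)).
    set (w := t - (/2*b*s+c) + /2*(-(a*s+b)*y - x * -s)).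
    assert (E1 : - (a * s + b) + x = v) by (unfold v; ring).
    assert (E2 : - s + y = u) by (unfold u; ring).
    assert (E3 : - (/ 2 * b * s + c) + t + / 2 * (- (a * s + b) * y - x * - s) = w) by (unfold w; ring).
    rewrite E1, E2, E3.
    set (d := Rmax _ _).
    assert (Hu : Rabs u <= d).
    { eapply Rle_trans; [|apply Rmax_l]. rewrite <- sqrt_Rsqr_abs. apply sqrt_le_1_alt.
      unfold Rsqr; nra. }
    assert (Hv : Rabs v <= d).
    { eapply Rle_trans; [|apply Rmax_l]. rewrite <- sqrt_Rsqr_abs. apply sqrt_le_1_alt.
      unfold Rsqr; nra. }
    assert (Hw : Rabs w <= d^2).
    { assert (H0 : sqrt (Rabs w) <= d) by apply Rmax_r.
      pose proof (sqrt_pos (Rabs w)).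
      rewrite <- (sqrt_sqrt (Rabs w)) by apply Rabs_pos. nra. }
    destruct (core a d u v w Hu Hv Hw) as [C1 C2].
    unfold M, dpar, Proj, QL, Hx, Hy, Ht; simpl. rewrite derq.
    apply Rmax_lub.
    - apply Rmax_lub.
      + replace (y - y) with 0 by ring. rewrite Rabs_R0. pose proof (Rabs_pos u). nra.
      + replace (t + / 2 * x * y - qL a b c y) with (w + v*u/2 - a*u^2/2).
        * lra.
        * unfold w, v, u, qL. field.
    - replace (x - (a*y+b)) with (v - a*u) by (unfold v, u; ring). lra. }
  unfold Hdist_set.
  set (S := fun r => exists q, hline a b c q /\ r = Hdist (x,y,t) q).
  destruct (Glb_Rbar_correct S) as [Hg1 Hg2].
  assert (Hm : Rbar_le (M / (2*(1+Rabs a))) (Glb_Rbar S)).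
  { apply Hg2. intros r [q [Hq ->]]. simpl. apply Hlb; auto. }
  assert (Hup : Rbar_le (Glb_Rbar S) (Hdist (x,y,t) (b, 0, c))).
  { apply Hg1. exists (b,0,c). split; [|reflexivity]. exists 0. f_equal; [f_equal|]; ring. }
  destruct (Glb_Rbar S) as [g| |] eqn:Eg; simpl in *; try contradiction.
  replace M with (M / (2*(1+Rabs a)) * (2*(1+Rabs a))) by (field; lra).
  nra.
Qed.
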